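(* Let $\Gamma^J=SL_2(\mathbb Z)\ltimes\mathbb Z^2$ be the full Jacobi group (pairs $(M,X)$, $M\in SL_2(\mathbb Z)$, $X\in\mathbb Z^2$ a row vector, with $(M,X)(M',X')=(MM',XM'+X')$), and consider the split extension $0\to\mathbb Z^2\xrightarrow{i}\Gamma^J\xrightarrow{\rho}SL_2(\mathbb Z)\to0$ with $i(X)=(I,X)$, $\rho(M,X)=M$. Then, with trivial integer coefficients, the induced sequence $$0\to H^2(SL_2(\mathbb Z))\xrightarrow{\rho^*}H^2(\Gamma^J)\xrightarrow{i^*}H^2(\mathbb Z^2)\to0$$ is exact and splits. *)

(* Defs.v *)
(* Group cohomology H^2(G; Z) with trivial integer coefficients,
   via inhomogeneous (standard) 2-cochains f : G -> G -> int. *)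
From HB Require Import structures.
From mathcomp Require Import all_boot all_order all_algebra.
Set Implicit Arguments. Unset Strict Implicit. Unset Printing Implicit Defensive.
Import Order.TTheory GRing.Theory Num.Theory.
Local Open Scope ring_scope.

Section Cochains.
Variable G : Type.
Variable mul : G -> G -> G.

Definition cocycle2 (f : G -> G -> int) : Prop :=
  forall g h k, f h k - f (mul g h) k + f g (mul h k) - f g h = 0.

Definition coboundary2 (f : G -> G -> int) : Prop :=
  exists c : G -> int, forall g h, f g h = c h - c (mul g h) + c g.
End Cochains.

Definition pull (H G : Type) (phi : H -> G) (f : G -> G -> int) : H -> H -> int :=
  fun x y => f (phi x) (phi y).

Definition cadd (G : Type) (f g : G -> G -> int) : G -> G -> int :=
  fun x y => f x y + g x y.
Definition csub (G : Type) (f g : G -> G -> int) : G -> G -> int :=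
  fun x y => f x y - g x y.

Definition SL2 := {M : 'M[int]_2 | \det M == 1}.

Lemma SL2_mul_proof (A B : SL2) : \det (sval A *m sval B) == 1.
Proof. by rewrite det_mulmx (eqP (svalP A)) (eqP (svalP B)) mulr1. Qed.

Definition SL2mul (A B : SL2) : SL2 := exist (fun M : 'M[int]_2 => \det M == 1) _ (SL2_mul_proof A B).

Lemma SL2_one_proof : \det (1%:M : 'M[int]_2) == 1.
Proof. by rewrite det1. Qed.

Definition SL2one : SL2 := exist (fun M : 'M[int]_2 => \det M == 1) _ SL2_one_proof.

Definition Z2 := 'rV[int]_2.
Definition Z2add (X Y : Z2) : Z2 := X + Y.

Definition Jac := (SL2 * Z2)%type.
Definition Jmul (p q : Jac) : Jac := (SL2mul p.1 q.1, p.2 *m sval q.1 + q.2).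

Definition iJ (X : Z2) : Jac := (SL2one, X).
Definition rhoJ (p : Jac) : SL2 := p.1.

(* Main.v *)
Require Import Defs.
From mathcomp Require Import all_boot all_order all_algebra.
From mathcomp Require Import zify ring lra.
Set Implicit Arguments. Unset Strict Implicit. Unset Printing Implicit Defensive.
Import Order.TTheory GRing.Theory Num.Theory.
Local Open Scope ring_scope.

Lemma det2 (M : 'M[int]_2) : \det M = M 0 0 * M 1 1 - M 0 1 * M 1 0.
Proof.
rewrite (expand_det_row M 0) !big_ord_recr big_ord0 /=.
rewrite /cofactor !det_mx11 !mxE /=.
have -> : (widen_ord (leqnSn 1) ord_max : 'I_2) = 0 by apply/val_inj.
have -> : (ord_max : 'I_2) = 1 by apply/val_inj.
have -> : lift (0:'I_2) (0:'I_1) = 1 by apply/val_inj.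
have -> : lift (1:'I_2) (0:'I_1) = 0 by apply/val_inj.
rewrite add0r expr0 expr1 mul1r; lia.
Qed.

Lemma SL2_eq (A B : SL2) : sval A = sval B -> A = B.
Proof. by move=> h; apply/val_inj. Qed.

Lemma SL2mul1 A : SL2mul SL2one A = A.
Proof. by apply: SL2_eq; rewrite /= mul1mx. Qed.
Lemma SL2mulr1 A : SL2mul A SL2one = A.
Proof. by apply: SL2_eq; rewrite /= mulmx1. Qed.
Lemma SL2mulA A B C : SL2mul A (SL2mul B C) = SL2mul (SL2mul A B) C.
Proof. by apply: SL2_eq; rewrite /= mulmxA. Qed.

Lemma JmulA p q r : Jmul p (Jmul q r) = Jmul (Jmul p q) r.
Proof.
case: p q r => [A X] [B Y] [C Z]; rewrite /Jmul /= SL2mulA.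
by rewrite mulmxDl mulmxA addrA.
Qed.

Definition sg (A : SL2) : Jac := (A, 0).

Lemma J1 A X : Jmul (sg A) (iJ X) = (A, X).
Proof. by rewrite /Jmul /= SL2mulr1 mul0mx add0r. Qed.
Lemma J2 X B : Jmul (iJ X) (sg B) = (B, X *m sval B).
Proof. by rewrite /Jmul /= SL2mul1 addr0. Qed.
Lemma J3 A B : Jmul (sg A) (sg B) = sg (SL2mul A B).
Proof. by rewrite /Jmul /= mul0mx addr0. Qed.
Lemma J4 X Y : Jmul (iJ X) (iJ Y) = iJ (X + Y).
Proof. by rewrite /Jmul /= SL2mul1 mulmx1. Qed.
Lemma J5 A B Y : Jmul (sg A) (B, Y) = (SL2mul A B, Y).
Proof. by rewrite /Jmul /= mul0mx add0r. Qed.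

Definition Wm : 'M[int]_2 := (-1)%:M.
Lemma Wm_det : \det Wm == 1.
Proof. by rewrite /Wm det_scalar expr2 mulrNN mulr1. Qed.
Definition W : SL2 := exist (fun M : 'M[int]_2 => \det M == 1) _ Wm_det.

Definition Um : 'M[int]_2 :=
  \matrix_(i, j) (if i == 0 then (if j == 0 then 0 else -1) else 1).
Lemma Um_det : \det Um == 1.
Proof. by rewrite det2 !mxE. Qed.
Definition U : SL2 := exist (fun M : 'M[int]_2 => \det M == 1) _ Um_det.

Lemma UmUm : Um *m Um = Um - 1%:M.
Proof.
apply/matrixP => i j; rewrite !mxE !big_ord_recr big_ord0 /= !mxE.
case: i => [[|[|i]] Hi] //; case: j => [[|[|j]] Hj] //=.
Qed.

Lemma key (F : Jac -> Jac -> int) : cocycle2 Jmul F ->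
  (forall X Y, F (iJ X) (iJ Y) = 0) -> (forall A B, F (sg A) (sg B) = 0) ->
  coboundary2 Jmul F.
Proof.
move=> cF hN hS.
pose G := fun p : Jac => F (sg p.1) (iJ p.2).
pose lam := fun (B : SL2) (X : Z2) => F (iJ X) (sg B) - F (sg B) (iJ (X *m sval B)).
have step1 : forall p q, F p q = lam q.1 p.2 - G q + G (Jmul p q) - G p.
  move=> [A X] [B Y].
  have e1 := cF (sg A) (iJ X) (B,Y).
  have e2 := cF (sg A) (sg B) (iJ (X *m sval B + Y)).
  have e3 := cF (iJ X) (sg B) (iJ Y).
  have e4 := cF (sg B) (iJ (X *m sval B)) (iJ Y).
  rewrite J1 in e1.
  rewrite J3 J1 hS in e2.
  rewrite J2 J1 in e3.
  rewrite J1 J4 hN in e4.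
  have E : Jmul (iJ X) (B, Y) = (B, X *m sval B + Y).
    by rewrite /Jmul /= SL2mul1.
  have E2 : Jmul (B, X *m sval B) (iJ Y) = (B, X *m sval B + Y).
    by rewrite /Jmul /= SL2mulr1 mulmx1.
  rewrite E in e1.
  rewrite /G /lam /=. lra.
have lamcoc : forall p q r, lam r.1 q.2 - lam r.1 (Jmul p q).2
     + lam (Jmul q r).1 p.2 - lam q.1 p.2 = 0.
  move=> p q r.
  have := cF p q r.
  have s1 := step1 q r; have s2 := step1 (Jmul p q) r.
  have s3 := step1 p (Jmul q r); have s4 := step1 p q.
  rewrite JmulA in s3.
  lra.
have lam1 : forall X, lam SL2one X = 0.
  move=> X; rewrite /lam.
  change (sg SL2one) with (iJ 0); by rewrite !hN subrr.
have ladd : forall C X Y, lam C (X + Y) = lam C X + lam C Y.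
  move=> C X Y; have := lamcoc (SL2one, X) (SL2one, Y) (C, 0).
  rewrite /Jmul /= mulmx1 SL2mul1 lam1; lra.
have lam0 : forall C, lam C 0 = 0.
  move=> C; have := ladd C 0 0; rewrite addr0; lra.
have lN : forall C X, lam C (- X) = - lam C X.
  move=> C X; have := ladd C X (- X); rewrite subrr lam0; lra.
have lcross : forall B C X, lam (SL2mul B C) X = lam B X + lam C (X *m sval B).
  move=> B C X; have := lamcoc (SL2one, X) (B, 0) (C, 0).
  rewrite /Jmul /= addr0 lam0; lra.
have WC : forall A, SL2mul W A = SL2mul A W.
  by move=> A; apply: SL2_eq; rewrite /= /Wm scalar_mxC.
have XW : forall X : Z2, X *m sval W = - X.
  by move=> X; rewrite /= /Wm mul_mx_scalar scaleN1r.
have h2 : forall A X, 2 * lam A X = lam W X - lam W (X *m sval A).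
  move=> A X; have := lcross W A X; have := lcross A W X.
  rewrite XW lN WC; lra.
pose nu := fun X : Z2 => lam U (X *m Um).
have hW : forall X, lam W X = 2 * nu X.
  move=> X; have := h2 U (X *m Um).
  rewrite /nu /= -mulmxA UmUm mulmxBr mulmx1 ladd lN; lra.
have hl : forall A X, lam A X = nu X - nu (X *m sval A).
  move=> A X; have := h2 A X; rewrite !hW; lra.
have nuadd : forall X Y, nu (X + Y) = nu X + nu Y.
  by move=> X Y; rewrite /nu mulmxDl ladd.
exists (fun p => nu p.2 - G p) => p q.
rewrite step1 hl.
case: p q => [A X] [B Y] /=.
rewrite nuadd; lra.
Qed.

Definition mk (x y : int) : Z2 := \row_(j < 2) (if j == 0 then x else y).
Lemma mk0 x y : mk x y 0 0 = x. Proof. by rewrite mxE. Qed.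
Lemma mk1 x y : mk x y 0 1 = y. Proof. by rewrite mxE. Qed.
Lemma mkE (v : Z2) : v = mk (v 0 0) (v 0 1).
Proof.
apply/rowP => j; rewrite mxE.
by case: j => [[|[|j]] Hj] //=; rewrite ?ord1; congr (v _ _); apply/val_inj.
Qed.
Lemma mkD x y x' y' : mk x y + mk x' y' = mk (x + x') (y + y').
Proof. by apply/rowP => j; rewrite !mxE; case: ifP. Qed.
Lemma mk00 : mk 0 0 = 0.
Proof. by apply/rowP => j; rewrite !mxE; case: ifP. Qed.

Definition prim (h : int -> int) (x : int) : int :=
  match x with
  | Posz n => \sum_(i < n) h (Posz i)
  | Negz n => - \sum_(i < n.+1) h (- (Posz i.+1))
  end.

Lemma prim0 h : prim h 0 = 0.
Proof. exact: big_ord0. Qed.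

Lemma primS h x : prim h (x + 1) = prim h x + h x.
Proof.
case: x => n.
- have -> : Posz n + 1 = Posz n.+1 by rewrite -addn1 PoszD.
  by rewrite /prim big_ord_recr.
- case: n => [|m].
  + have -> : Negz 0 + 1 = 0 by [].
    rewrite prim0 /prim big_ord_recr big_ord0 /= NegzE; lra.
  + have -> : Negz m.+1 + 1 = Negz m.
      by rewrite !NegzE -[(m.+2)%N]addn1 PoszD opprD subrK.
    rewrite /prim [in RHS]big_ord_recr /= NegzE; lra.
Qed.

Lemma int_ind2 (Q : int -> Prop) : Q 0 -> (forall x, Q x -> Q (x + 1)) ->
  (forall x, Q (x + 1) -> Q x) -> forall x, Q x.
Proof.
move=> h0 hu hd [] n.
- elim: n => [|n IH] //.
  by have := hu _ IH; rewrite -addn1 PoszD.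
- elim: n => [|n IH].
  + by apply: hd.
  + apply: hd.
    have -> : Negz n.+1 + 1 = Negz n.
      by rewrite !NegzE -[(n.+2)%N]addn1 PoszD opprD subrK.
    exact: IH.
Qed.

Definition e1 := mk 1 0.
Definition e2 := mk 0 1.

Lemma H2Z2 f : cocycle2 Z2add f -> f e1 e2 = f e2 e1 -> coboundary2 Z2add f.
Proof.
move=> cf sym.
pose z := f 0 0.
pose w1 := fun t => - f (mk t 0) e1.
pose w2 := fun x t => - f (mk x t) e2.
pose c := fun v : Z2 => z + prim w1 (v 0 0) + prim (w2 (v 0 0)) (v 0 1).
have cmk : forall x y, c (mk x y) = z + prim w1 x + prim (w2 x) y.
  by move=> x y; rewrite /c mk0 mk1.
have c2 : forall x y, c (mk x (y+1)) = c (mk x y) - f (mk x y) e2.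
  by move=> x y; rewrite !cmk primS /w2; lra.
have clos : forall v, f v e1 + f (v + e1) e2 = f v e2 + f (v + e2) e1.
  move=> v; have := cf v e1 e2; have := cf v e2 e1.
  rewrite /Z2add sym [e2 + e1]addrC; lra.
have c1 : forall x y, c (mk (x+1) y) = c (mk x y) - f (mk x y) e1.
  move=> x.
  pose D := fun y => c (mk (x+1) y) - c (mk x y) + f (mk x y) e1.
  have DS : forall y, D (y + 1) = D y.
    move=> y; rewrite /D !c2.
    have := clos (mk x y); rewrite /e1 /e2 !mkD !addr0; lra.
  have D0 : D 0 = 0.
    by rewrite /D !cmk !prim0 primS /w1; lra.
  have DD : forall y, D y = 0.
    apply: int_ind2 => // y; first by rewrite DS.
    by rewrite DS.
  by move=> y; have := DD y; rewrite /D; lra.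
have cs1 : forall v, c (v + e1) = c v - f v e1.
  by move=> v; rewrite [v]mkE /e1 mkD addr0 c1.
have cs2 : forall v, c (v + e2) = c v - f v e2.
  by move=> v; rewrite [v]mkE /e2 mkD addr0 c2.
have c0 : c 0 = z by rewrite -mk00 cmk !prim0; lra.
have f0 : forall g, f g 0 = z.
  by move=> g; have := cf g 0 0; rewrite /Z2add !addr0 /z; lra.
pose P := fun h => forall g, f g h = c h - c (g + h) + c g.
have Pstep : forall e, (forall v, c (v + e) = c v - f v e) ->
    forall h, P h <-> P (h + e).
  move=> e he h; split => Ph g; have := cf g h e; rewrite /Z2add;
    have := Ph g; have E1 := he h; have E2 := he (g + h);
    rewrite -addrA in E2; lra.
have P0 : P 0 by move=> g; rewrite f0 c0 addr0; lra.
have mkS1 : forall x y, mk x y + e1 = mk (x+1) y by move=> x y; rewrite /e1 mkD addr0.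
have mkS2 : forall x y, mk x y + e2 = mk x (y+1) by move=> x y; rewrite /e2 mkD addr0.
have Pall : forall x y, P (mk x y).
  apply: int_ind2.
  - apply: int_ind2; first by rewrite mk00.
    + by move=> y Py; rewrite -mkS2; apply: (proj1 (Pstep e2 cs2 _)).
    + by move=> y; rewrite -mkS2 => /(proj2 (Pstep e2 cs2 _)).
  - by move=> x Px y; rewrite -mkS1; apply: (proj1 (Pstep e1 cs1 _)).
  - by move=> x Px y; move: (Px y); rewrite -mkS1 => /(proj2 (Pstep e1 cs1 _)).
exists c => g h.
by have := Pall (h 0 0) (h 0 1) g; rewrite -mkE.
Qed.

Lemma even2 (n : int) : exists k, n * (n + 1) = 2 * k.
Proof.
elim/int_ind2: n.
- by exists 0; rewrite mul0r mulr0.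
- move=> n [k hk]; exists (k + n + 1).
  have -> : (n + 1) * (n + 1 + 1) = n * (n + 1) + 2 * (n + 1) by ring.
  rewrite hk; ring.
- move=> n [k hk]; exists (k - n - 1).
  have -> : n * (n + 1) = (n + 1) * (n + 1 + 1) - 2 * (n + 1) by ring.
  rewrite hk; ring.
Qed.

Lemma mulE (X : Z2) (M : 'M[int]_2) j : (X *m M) 0 j = X 0 0 * M 0 j + X 0 1 * M 1 j.
Proof.
rewrite mxE !big_ord_recr big_ord0 /= add0r.
have -> : (widen_ord (leqnSn 1) ord_max : 'I_2) = 0 by apply/val_inj.
by have -> : (ord_max : 'I_2) = 1 by apply/val_inj.
Qed.

Lemma detSL (B : SL2) : sval B 0 0 * sval B 1 1 - sval B 0 1 * sval B 1 0 = 1.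
Proof. by rewrite -det2; apply/eqP; exact: (svalP B). Qed.

Definition Qf (v : Z2) : int := (v 0 0 + 1) * (v 0 1 + 1).
Definition kk (B : SL2) (X : Z2) : int := ((Qf (X *m sval B) - Qf X) %/ 2)%Z.

Lemma kkE B X : kk B X * 2 = Qf (X *m sval B) - Qf X.
Proof.
apply: divzK; apply/dvdzP.
have hd := detSL B.
move: hd; rewrite /Qf !mulE.
set a := sval B 0 0; set b := sval B 0 1; set c := sval B 1 0; set d := sval B 1 1.
set x := X 0 0; set y := X 0 1 => hd.
have [kx hx] := even2 (x - 1).
have [ky hy] := even2 (y - 1).
have [ka ha] := even2 a.
have [kb hb] := even2 b.
have [kc hc] := even2 c.
have [kd hd'] := even2 d.
have hab : (a + 1) * (b + 1) = 2 * (ka * (b + 1) * d - kb * (a + 1) * c).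
  have -> : (a + 1) * (b + 1) = (a + 1) * (b + 1) * (a * d - b * c) by rewrite hd mulr1.
  have -> : (a + 1) * (b + 1) * (a * d - b * c) =
     (a * (a + 1)) * (b + 1) * d - (b * (b + 1)) * (a + 1) * c by ring.
  rewrite ha hb; ring.
have hcd : (c + 1) * (d + 1) = 2 * (kd * (c + 1) * a - kc * (d + 1) * b).
  have -> : (c + 1) * (d + 1) = (c + 1) * (d + 1) * (a * d - b * c) by rewrite hd mulr1.
  have -> : (c + 1) * (d + 1) * (a * d - b * c) =
     (d * (d + 1)) * (c + 1) * a - (c * (c + 1)) * (d + 1) * b by ring.
  rewrite hc hd'; ring.
have -> : (x * a + y * c + 1) * (x * b + y * d + 1) - (x + 1) * (y + 1) =
   ((x - 1) * (x - 1 + 1)) * a * b + x * ((a + 1) * (b + 1) - 2) + 2 * x * y * b * c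
   + ((y - 1) * (y - 1 + 1)) * c * d + y * ((c + 1) * (d + 1) - 2)
   + x * y * (a * d - b * c - 1) by ring.
rewrite hd subrr mulr0 addr0 hx hy hab hcd.
exists (kx * a * b + x * (ka * (b + 1) * d - kb * (a + 1) * c - 1) + x * y * b * c
   + ky * c * d + y * (kd * (c + 1) * a - kc * (d + 1) * b - 1)); ring.
Qed.

Definition F0 (p q : Jac) : int := (p.2 *m sval q.1) 0 0 * q.2 0 1 + kk q.1 p.2.

Lemma F0_iJ X Y : F0 (iJ X) (iJ Y) = X 0 0 * Y 0 1.
Proof. by rewrite /F0 /kk /= !mulmx1 subrr div0z addr0. Qed.

Lemma F0_coc : cocycle2 Jmul F0.
Proof.
move=> [A X] [B Y] [C Z]; rewrite /F0 /Jmul /=.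
have k1 := kkE C Y; have k2 := kkE C (X *m sval B + Y).
have k3 := kkE (SL2mul B C) X; have k4 := kkE B X.
rewrite /= mulmxA in k3. rewrite mulmxA.
have hC := detSL C.
move: k1 k2 k3 k4.
set k1 := kk C Y; set k2 := kk C _; set k3 := kk _ X; set k4 := kk B X.
set u := X *m sval B.
clearbody u k1 k2 k3 k4.
have addE : forall (v w : Z2) j, (v + w) 0 j = v 0 j + w 0 j by move=> v w j; rewrite mxE.
rewrite /Qf !mulE !addE !mulE => k1e k2e k3e k4e.
move: hC.
set c00 := sval C 0 0; set c01 := sval C 0 1; set c10 := sval C 1 0; set c11 := sval C 1 1 => hC.
set L := (X in X = 0).
have h : L * 2 = (c00 * c11 - c01 * c10 - 1) * (u 0 0 * Y 0 1 - u 0 1 * Y 0 0).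
  rewrite /L !(mulrDl, mulrBl, mulNr) k1e k2e k3e k4e; ring.
rewrite hC subrr mul0r in h.
by move/eqP: h; rewrite mulf_eq0 orbF => /eqP.
Qed.

Definition f0Z2 (u v : Z2) : int := u 0 0 * v 0 1.
Definition nf (f : Z2 -> Z2 -> int) : int := f e1 e2 - f e2 e1.

Lemma cls f : cocycle2 Z2add f ->
  exists c : Z2 -> int, forall X Y : Z2, nf f * (X 0 0 * Y 0 1) - f X Y = c Y - c (X + Y) + c X.
Proof.
move=> cf.
pose f' := fun X Y : Z2 => f X Y - nf f * (X 0 0 * Y 0 1).
have cf' : cocycle2 Z2add f'.
  move=> g h k; have H := cf g h k; rewrite /Z2add in H *.
  rewrite /f' !mxE -H; ring.
have sym : f' e1 e2 = f' e2 e1.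
  rewrite /f' /nf /e1 /e2 !mk0 !mk1; lra.
have [c hc] := H2Z2 cf' sym.
exists (fun v => - c v) => X Y.
have := hc X Y; rewrite /f' /Z2add; lra.
Qed.

Lemma sF_coc (n : int) : cocycle2 Jmul (fun p q => n * F0 p q).
Proof.
move=> p q r; have H := F0_coc p q r.
transitivity (n * (F0 q r - F0 (Jmul p q) r + F0 p (Jmul q r) - F0 p q)).
  by ring.
by rewrite H mulr0.
Qed.

Theorem theorem5 :
  (* rho^* injective *)
  (forall f : SL2 -> SL2 -> int, cocycle2 SL2mul f ->
     coboundary2 Jmul (pull rhoJ f) -> coboundary2 SL2mul f) /\
  (* i^* o rho^* = 0 *)
  (forall f : SL2 -> SL2 -> int, cocycle2 SL2mul f ->
     coboundary2 Z2add (pull iJ (pull rhoJ f))) /\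
  (* ker i^* is contained in im rho^* *)
  (forall F : Jac -> Jac -> int, cocycle2 Jmul F ->
     coboundary2 Z2add (pull iJ F) ->
     exists f : SL2 -> SL2 -> int, cocycle2 SL2mul f /\
       coboundary2 Jmul (csub F (pull rhoJ f))) /\
  (* i^* surjective *)
  (forall f : Z2 -> Z2 -> int, cocycle2 Z2add f ->
     exists F : Jac -> Jac -> int, cocycle2 Jmul F /\
       coboundary2 Z2add (csub (pull iJ F) f)) /\
  (* splitting: a group homomorphism s : H^2(Z^2) -> H^2(Gamma^J) with i^* o s = id *)
  (exists s : (Z2 -> Z2 -> int) -> (Jac -> Jac -> int),
     (forall f, cocycle2 Z2add f -> cocycle2 Jmul (s f)) /\
     (forall f g, cocycle2 Z2add f -> cocycle2 Z2add g ->
        coboundary2 Z2add (csub f g) -> coboundary2 Jmul (csub (s f) (s g))) /\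
     (forall f g, cocycle2 Z2add f -> cocycle2 Z2add g ->
        coboundary2 Jmul (csub (s (cadd f g)) (cadd (s f) (s g)))) /\
     (forall f, cocycle2 Z2add f -> coboundary2 Z2add (csub (pull iJ (s f)) f))).
Proof.
have part4 : forall f, cocycle2 Z2add f ->
    coboundary2 Z2add (csub (pull iJ (fun p q => nf f * F0 p q)) f).
  move=> f cf; have [c hc] := cls cf; exists c => X Y.
  by rewrite /csub /pull F0_iJ; exact: hc.
split.
  move=> f cf [c hc]; exists (fun A => c (sg A)) => A B.
  by have := hc (sg A) (sg B); rewrite J3.
split.
  move=> f cf; exists (fun _ => f SL2one SL2one) => X Y; rewrite /pull /=; lra.
split.
  move=> F cF [c hc].
  pose C := fun p : Jac => c p.2.
  pose f := fun A B : SL2 => F (sg A) (sg B) - c 0.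
  have fcoc : cocycle2 SL2mul f.
    move=> A B D; have := cF (sg A) (sg B) (sg D); rewrite /f !J3; lra.
  exists f; split => //.
  have pc : cocycle2 Jmul (pull rhoJ f).
    move=> p q r; exact: (fcoc p.1 q.1 r.1).
  pose F2 := fun p q => F p q - (C q - C (Jmul p q) + C p) - pull rhoJ f p q.
  have cF2 : cocycle2 Jmul F2.
    move=> p q r; have h1 := cF p q r; have h2 := pc p q r.
    have h3 : C (Jmul p (Jmul q r)) = C (Jmul (Jmul p q) r) by rewrite JmulA.
    rewrite /F2; lra.
  have hN : forall X Y, F2 (iJ X) (iJ Y) = 0.
    move=> X Y; rewrite /F2 J4 /C /pull /f /=.
    have h1 := hc X Y; rewrite /pull /Z2add /= in h1.
    have h0 := hc 0 0.
    change (F (sg SL2one) (sg SL2one) = c 0 - c (0 + 0) + c 0) in h0.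
    rewrite addr0 in h0; lra.
  have hS : forall A B, F2 (sg A) (sg B) = 0.
    move=> A B; rewrite /F2 J3 /C /pull /f /=; lra.
  have [D hD] := key cF2 hN hS.
  exists (fun p => D p + C p) => p q.
  have := hD p q; rewrite /csub /F2; lra.
split.
  move=> f cf; exists (fun p q => nf f * F0 p q); split; first exact: sF_coc.
  exact: part4.
exists (fun f p q => nf f * F0 p q).
split; first by move=> f _; exact: sF_coc.
split.
  move=> f g cf cg [c hc].
  have heq : nf f = nf g.
    have := hc e1 e2; have := hc e2 e1; rewrite /csub /Z2add [e2 + e1]addrC /nf; lra.
  by exists (fun _ => 0) => p q; rewrite /csub heq; lra.
split.
  move=> f g cf cg.
  have hadd : nf (cadd f g) = nf f + nf g by rewrite /nf /cadd; lra.
  by exists (fun _ => 0) => p q; rewrite /csub /cadd hadd; ring.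
move=> f cf; exact: part4.
Qed.
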